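(* Assume all $q_{ij}$ are roots of unity. Let $\mathbf{b}_1,\ldots,\mathbf{b}_n$ be a $\mathbb{Z}$-basis of the group $S$, and set $z_i=x^{\mathbf{b}_i}\in L$ for $i=1,\ldots,n$. The following are equivalent: (i) after reordering if necessary, $\mathbf{b}_1,\ldots,\mathbf{b}_n$ is a positive diagonal basis of $S$; (ii) the center $Z(L)$ of $L$ is a commutative Laurent series ring over $k$ in $z_1,\ldots,z_n$, i.e. $Z(L)$ consists exactly of the (well-defined) series $\sum_{m\in\mathbb{Z}^n}\mu_m z_1^{m_1}\cdots z_n^{m_n}$ with $\mu_m\in k$ and $\mu_m=0$ whenever $\min\{m_1,\ldots,m_n\}$ is sufficiently negative, and $Z(L)\cong k[[z_1^{\pm1},\ldots,z_n^{\pm1}]]$ via $z_i\mapsto z_i$; (iii) the center $Z(R)$ of $R$ is a commutative power series ring over $k$ in $z_1,\ldots,z_n$, i.e. $Z(R)$ consists exactly of the series $\sum_{m\in\mathbb{N}^n}\mu_m z_1^{m_1}\cdots z_n^{m_n}$, $\mu_m\in k$, and $Z(R)\cong k[[z_1,\ldots,z_n]]$.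
   Context: $k$ is an algebraically closed field, $n$ a positive integer, $q=(q_{ij})$ an $n\times n$ matrix over $k^\times$ with $q_{ii}=1$ and $q_{ij}=q_{ji}^{-1}$. $R=k_q[[x_1,\ldots,x_n]]$ is the $q$-commutative power series ring: the $k$-algebra of formal power series $\sum_{s\in\mathbb{N}^n}c_sx^s$ ($x^s=x_1^{s_1}\cdots x_n^{s_n}$) with multiplication determined by $x_ix_j=q_{ij}x_jx_i$. $L=k_q[[x_1^{\pm1},\ldots,x_n^{\pm1}]]$ is the Ore localization of $R$ at the multiplicative set generated by $x_1,\ldots,x_n$; its elements are series $\sum_{s\in\mathbb{Z}^n}c_sx^s$ with $c_s=0$ when $\min\{s_1,\ldots,s_n\}$ is sufficiently negative, and $x^s=x_1^{s_1}\cdots x_n^{s_n}$ for $s\in\mathbb{Z}^n$. Define $\sigma:\mathbb{Z}^n\times\mathbb{Z}^n\to k^\times$ by $\sigma(s,t)=\prod_{i,j=1}^n q_{ij}^{s_it_j}$ (so $x^sx^t=\sigma(s,t)x^tx^s$), and $S=\{s\in\mathbb{Z}^n:\sigma(s,t)=1\text{ for all }t\in\mathbb{Z}^n\}$, a free abelian subgroup of $\mathbb{Z}^n$ of rank $n$. A $\mathbb{Z}$-basis $\mathbf{b}_1,\ldots,\mathbf{b}_n$ of $S$ is positive diagonal if the $n\times n$ matrix whose $i$th row is $\mathbf{b}_i$ is diagonal with all diagonal entries positive. *)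

(* Defs.v *)
From HB Require Import structures.
From mathcomp Require Import all_boot all_order all_algebra all_fingroup.
Set Implicit Arguments. Unset Strict Implicit. Unset Printing Implicit Defensive.
Import Order.TTheory GRing.Theory Num.Theory.
Local Open Scope ring_scope.

(* Exponent vectors s in Z^n are row vectors 'rV[int]_n; the i-th
   component is s ord0 i.  A formal series sum_s c_s x^s is represented
   by its coefficient function c : 'rV[int]_n -> k. *)

(* L = k_q[[x^{+-1}]]: c_s = 0 whenever min_i s_i < -N, for some N. *)
Definition isL (k : fieldType) (n : nat) (c : 'rV[int]_n -> k) : Prop :=
  exists N : nat, forall s, c s != 0 -> forall i, - (N%:Z) <= s ord0 i.

(* R = k_q[[x]]: support in N^n. *)
Definition isR (k : fieldType) (n : nat) (c : 'rV[int]_n -> k) : Prop :=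
  forall s, c s != 0 -> forall i, 0 <= s ord0 i.

(* gam q s t : the scalar with x^s x^t = gam q s t x^(s+t), where
   x^s = x_1^{s_1} ... x_n^{s_n}; gam q s t = prod_{i>j} q_ij^{s_i t_j}. *)
Definition gam (k : fieldType) (n : nat) (q : 'M[k]_n) (s t : 'rV[int]_n) : k :=
  \prod_(i < n) \prod_(j < n | (j < i)%N) q i j ^ (s ord0 i * t ord0 j).

Definition sigma (k : fieldType) (n : nat) (q : 'M[k]_n) (s t : 'rV[int]_n) : k :=
  \prod_(i < n) \prod_(j < n) q i j ^ (s ord0 i * t ord0 j).

Definition inS (k : fieldType) (n : nat) (q : 'M[k]_n) (s : 'rV[int]_n) : Prop :=
  forall t, sigma q s t = 1.

Definition isZbasisS (k : fieldType) (n : nat) (q : 'M[k]_n) (B : 'M[int]_n) : Prop :=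
  (forall i, inS q (row i B)) /\
  (forall s, inS q s -> exists! m : 'rV[int]_n, s = m *m B).

Definition pos_diag_after_reorder (n : nat) (B : 'M[int]_n) : Prop :=
  exists p : 'S_n, forall i j : 'I_n,
    (i != j -> B (p i) j = 0) /\ 0 < B (p i) i.

Definition boxsum (k : fieldType) (n : nat) (M : nat) (F : 'rV[int]_n -> k) : k :=
  \sum_(v : {ffun 'I_n -> 'I_(M.*2.+1)}) F (\row_i ((v i : nat)%:Z - M%:Z)).

(* h = f * g for the twisted product with cocycle g0:
   h_u = sum_s f_s g_(u-s) g0(s,u-s)  (a finite sum for series in L;
   expressed as the eventually constant value of sums over large boxes). *)
Definition mulrel (k : fieldType) (n : nat) (g0 : 'rV[int]_n -> 'rV[int]_n -> k)
    (f g h : 'rV[int]_n -> k) : Prop :=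
  forall u, exists M : nat, forall M' : nat, (M <= M')%N ->
    h u = boxsum M' (fun s => f s * g (u - s) * g0 s (u - s)).

Definition central (k : fieldType) (n : nat) (P : ('rV[int]_n -> k) -> Prop)
    (g0 : 'rV[int]_n -> 'rV[int]_n -> k) (f : 'rV[int]_n -> k) : Prop :=
  forall g, P g -> forall h, mulrel g0 f g h <-> mulrel g0 g f h.

(* zcoef q B m : the scalar with z_1^{m_1} ... z_n^{m_n} = zcoef q B m x^{m B},
   where z_i = x^{b_i}, b_i = row i B.  Indeed (x^b)^m = gam(b,b)^{m(m-1)/2} x^{mb}
   for all m in Z, and x^{a_1} ... x^{a_n} = prod_{i<j} gam(a_i,a_j) x^{a_1+...+a_n}. *)
Definition zcoef (k : fieldType) (n : nat) (q : 'M[k]_n) (B : 'M[int]_n)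
    (m : 'rV[int]_n) : k :=
  (\prod_(i < n) gam q (row i B) (row i B) ^ ((m ord0 i * (m ord0 i - 1)) %/ 2)%Z) *
  \prod_(i < n) \prod_(j < n | (i < j)%N)
     gam q (m ord0 i *: row i B) (m ord0 j *: row j B).

(* f = sum_m mu_m z_1^{m_1} ... z_n^{m_n} (coefficientwise). *)
Definition PhiRel (k : fieldType) (n : nat) (q : 'M[k]_n) (B : 'M[int]_n)
    (mu f : 'rV[int]_n -> k) : Prop :=
  forall u, (forall m, m *m B = u -> f u = mu m * zcoef q B m) /\
            ((forall m, m *m B != u) -> f u = 0).

(* The center of the ring P (= L or R) is the (Laurent) power series ring over k
   in z_1..z_n, where the coefficient families mu range over P as well
   (i.e. over k[[z^{+-1}]] resp. k[[z]]), via mu |-> sum_m mu_m z^m. *)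
Definition center_is_series_ring (k : fieldType) (n : nat)
    (P : ('rV[int]_n -> k) -> Prop) (q : 'M[k]_n) (B : 'M[int]_n) : Prop :=
  [/\
      forall mu, P mu -> exists f, P f /\ PhiRel q B mu f,
      forall f, (P f /\ central P (gam q) f) <-> (exists mu, P mu /\ PhiRel q B mu f),
      forall mu nu f, P mu -> P nu -> PhiRel q B mu f -> PhiRel q B nu f -> mu = nu,
      forall (a : k) mu nu f g, PhiRel q B mu f -> PhiRel q B nu g ->
        PhiRel q B (fun s => a * mu s + nu s) (fun s => a * f s + g s)
    & (* multiplicativity: commutative product of k[[z]] goes to the product of L *)
      forall mu nu rho f g h, P mu -> P nu ->
        mulrel (fun _ _ => 1) mu nu rho ->
        PhiRel q B mu f -> PhiRel q B nu g -> PhiRel q B rho h ->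
        mulrel (gam q) f g h].

(* Main.v *)
Require Import Defs.
From HB Require Import structures.
From mathcomp Require Import all_boot all_order all_algebra all_fingroup.
From mathcomp Require Import zify ring.
From Stdlib Require Import FunctionalExtensionality Classical.
Set Implicit Arguments. Unset Strict Implicit. Unset Printing Implicit Defensive.
Import Order.TTheory GRing.Theory Num.Theory.
Local Open Scope ring_scope.

Definition rowof (n M : nat) (v : {ffun 'I_n -> 'I_(M.*2.+1)}) : 'rV[int]_n :=
  \row_i ((v i : nat)%:Z - M%:Z).
Definition boxseq (n M : nat) := map (@rowof n M) (index_enum {ffun 'I_n -> 'I_(M.*2.+1)}).

Lemma boxsumE (k : fieldType) n M (F : 'rV[int]_n -> k) :
  boxsum M F = \sum_(s <- boxseq n M) F s.
Proof. by rewrite /boxsum /boxseq big_map. Qed.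

Lemma rowof_inj n M : injective (@rowof n M).
Proof.
move=> v w /rowP h; apply/ffunP=> i; apply: val_inj.
have := h i; rewrite !mxE; by move=> /addIr [].
Qed.

Lemma boxseq_uniq n M : uniq (boxseq n M).
Proof. by rewrite map_inj_uniq ?index_enum_uniq //; apply: rowof_inj. Qed.

Definition inbox n (M : nat) (s : 'rV[int]_n) :=
  forall i, - (M%:Z) <= s ord0 i <= M%:Z.

Lemma mem_boxseq n M s : inbox M s -> s \in boxseq n M.
Proof.
move=> h.
pose v : {ffun 'I_n -> 'I_(M.*2.+1)} := [ffun i => inord (absz (s ord0 i + M%:Z))].
have ->: s = rowof v.
  apply/rowP=> j; rewrite !mxE ffunE.
  have /andP[h1 h2] := h j.
  have e: ((absz (s ord0 j + M%:Z))%:Z = s ord0 j + M%:Z) by rewrite gez0_abs; lia.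
  have -> : (0 : 'I_1) = ord0 by apply: val_inj.
  rewrite inordK; last by rewrite -ltz_nat e -addnn; lia.
  by rewrite e addrK.
by apply: map_f; rewrite mem_index_enum.
Qed.

Lemma boxseq_inbox n M s : s \in boxseq n M -> inbox M s.
Proof.
case/mapP=> v _ -> i; rewrite mxE.
have := ltn_ord (v i); move: (nat_of_ord (v i)) => x; rewrite -addnn; lia.
Qed.

Lemma sum_supp (k : fieldType) (T : eqType) (r1 r2 : seq T) (F : T -> k) :
  uniq r1 -> uniq r2 -> (forall s, F s != 0 -> (s \in r1) && (s \in r2)) ->
  \sum_(s <- r1) F s = \sum_(s <- r2) F s.
Proof.
move=> u1 u2 h.
have z r : \sum_(s <- r | F s == 0) F s = 0 by rewrite big1 // => s /eqP.
rewrite (bigID (fun s => F s == 0)) /= z add0r.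
rewrite [RHS](bigID (fun s => F s == 0)) /= z add0r.
rewrite -[LHS]big_filter -[RHS]big_filter; apply: perm_big; apply: uniq_perm; try exact: filter_uniq.
move=> s; rewrite !mem_filter; case: (boolP (F s == 0)) => //= /h /andP[-> ->].
by [].
Qed.

Lemma boxsum_eq (k : fieldType) n M M' (F : 'rV[int]_n -> k) :
  (forall s, F s != 0 -> inbox M s /\ inbox M' s) -> boxsum M F = boxsum M' F.
Proof.
move=> h; rewrite !boxsumE; apply: sum_supp; rewrite ?boxseq_uniq //.
by move=> s /h [h1 h2]; apply/andP; split; apply: mem_boxseq.
Qed.

Lemma inbox_le n M M' (s : 'rV[int]_n) : (M <= M')%N -> inbox M s -> inbox M' s.
Proof. move=> le h i; have := h i; lia. Qed.

Lemma boxsum_refl (k : fieldType) n M M' (u : 'rV[int]_n) (F : 'rV[int]_n -> k) :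
  (forall s, F s != 0 -> inbox M' s /\ inbox M (u - s)) ->
  boxsum M (fun s => F (u - s)) = boxsum M' F.
Proof.
move=> h; rewrite !boxsumE -(big_map (fun s => u - s) xpredT).
apply: sum_supp; rewrite ?boxseq_uniq //.
  by rewrite map_inj_uniq ?boxseq_uniq // => x y /addrI /oppr_inj.
move=> s /h [h1 h2]; rewrite (mem_boxseq h1) andbT.
have ->: s = u - (u - s) by rewrite opprB addrC subrK.
by apply: map_f; rewrite mem_boxseq.
Qed.

Lemma ev_iff (k : Type) (h : k) (A C : nat -> k) :
  (exists M0, forall M, (M0 <= M)%N -> A M = C M) ->
  ((exists M, forall M', (M <= M')%N -> h = A M') <->
   (exists M, forall M', (M <= M')%N -> h = C M')).
Proof.
case=> M0 e; split=> -[M hM]; exists (maxn M0 M) => M' le.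
  by rewrite -e; [apply: hM|]; lia.
by rewrite e; [apply: hM|]; lia.
Qed.

Lemma ev_uniq (k : Type) (h h' : k) (A : nat -> k) :
  (exists M, forall M', (M <= M')%N -> h = A M') ->
  (exists M, forall M', (M <= M')%N -> h' = A M') -> h = h'.
Proof.
case=> M hM [M' hM']; rewrite (hM (maxn M M')) ?(hM' (maxn M M')) //; [apply: leq_maxr | apply: leq_maxl].
Qed.




Lemma prodXz (k : fieldType) (I : Type) (r : seq I) (P : pred I) (F : I -> k) (z : int) :
  \prod_(i <- r | P i) F i ^ z = (\prod_(i <- r | P i) F i) ^ z.
Proof. by rewrite (big_morph (fun x => x ^ z) (fun x y => expfzMl x y z) (exp1rz _ z)). Qed.

Lemma gamDl (k : fieldType) n (q : 'M[k]_n) (hq0 : forall i j, q i j != 0) s s' t :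
  gam q (s + s') t = gam q s t * gam q s' t.
Proof.
rewrite /gam -big_split; apply: eq_bigr => i _; rewrite -big_split.
by apply: eq_bigr => j _; rewrite mxE mulrDl expfzDr.
Qed.

Lemma gamDr (k : fieldType) n (q : 'M[k]_n) (hq0 : forall i j, q i j != 0) s t t' :
  gam q s (t + t') = gam q s t * gam q s t'.
Proof.
rewrite /gam -big_split; apply: eq_bigr => i _; rewrite -big_split.
by apply: eq_bigr => j _; rewrite mxE mulrDr expfzDr.
Qed.

Lemma gam0l (k : fieldType) n (q : 'M[k]_n) t : gam q 0 t = 1.
Proof. by rewrite /gam big1 // => i _; rewrite big1 // => j _; rewrite mxE mul0r expr0z. Qed.

Lemma gam0r (k : fieldType) n (q : 'M[k]_n) s : gam q s 0 = 1.
Proof. by rewrite /gam big1 // => i _; rewrite big1 // => j _; rewrite mxE mulr0 expr0z. Qed.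

Lemma gamZl (k : fieldType) n (q : 'M[k]_n) a s t : gam q (a *: s) t = gam q s t ^ a.
Proof.
rewrite /gam -prodXz; apply: eq_bigr => i _; rewrite -prodXz.
by apply: eq_bigr => j _; rewrite mxE exprz_exp; congr (_ ^ _); ring.
Qed.

Lemma gamZr (k : fieldType) n (q : 'M[k]_n) a s t : gam q s (a *: t) = gam q s t ^ a.
Proof.
rewrite /gam -prodXz; apply: eq_bigr => i _; rewrite -prodXz.
by apply: eq_bigr => j _; rewrite mxE exprz_exp; congr (_ ^ _); ring.
Qed.

Lemma gam_suml (k : fieldType) n (q : 'M[k]_n) (hq0 : forall i j, q i j != 0)
   (I : Type) (r : seq I) (P : pred I) (F : I -> 'rV[int]_n) t :
  gam q (\sum_(i <- r | P i) F i) t = \prod_(i <- r | P i) gam q (F i) t.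
Proof. exact: (big_morph (fun s => gam q s t) (fun s s' => gamDl hq0 s s' t) (gam0l q t)). Qed.

Lemma gam_sumr (k : fieldType) n (q : 'M[k]_n) (hq0 : forall i j, q i j != 0)
   (I : Type) (r : seq I) (P : pred I) (F : I -> 'rV[int]_n) s :
  gam q s (\sum_(i <- r | P i) F i) = \prod_(i <- r | P i) gam q s (F i).
Proof. exact: (big_morph (fun t => gam q s t) (fun t t' => gamDr hq0 s t t') (gam0r q s)). Qed.

Lemma gam_neq0 (k : fieldType) n (q : 'M[k]_n) (hq0 : forall i j, q i j != 0) s t :
  gam q s t != 0.
Proof.
apply/prodf_neq0 => i _; apply/prodf_neq0 => j _; exact: expfz_neq0.
Qed.

Lemma sigmaDl (k : fieldType) n (q : 'M[k]_n) (hq0 : forall i j, q i j != 0) s s' t :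
  sigma q (s + s') t = sigma q s t * sigma q s' t.
Proof.
rewrite /sigma -big_split; apply: eq_bigr => i _; rewrite -big_split.
by apply: eq_bigr => j _; rewrite mxE mulrDl expfzDr.
Qed.

Lemma sigmaDr (k : fieldType) n (q : 'M[k]_n) (hq0 : forall i j, q i j != 0) s t t' :
  sigma q s (t + t') = sigma q s t * sigma q s t'.
Proof.
rewrite /sigma -big_split; apply: eq_bigr => i _; rewrite -big_split.
by apply: eq_bigr => j _; rewrite mxE mulrDr expfzDr.
Qed.

Lemma sigma0l (k : fieldType) n (q : 'M[k]_n) t : sigma q 0 t = 1.
Proof. by rewrite /sigma big1 // => i _; rewrite big1 // => j _; rewrite mxE mul0r expr0z. Qed.

Lemma sigma0r (k : fieldType) n (q : 'M[k]_n) s : sigma q s 0 = 1.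
Proof. by rewrite /sigma big1 // => i _; rewrite big1 // => j _; rewrite mxE mulr0 expr0z. Qed.

Lemma sigmaZl (k : fieldType) n (q : 'M[k]_n) a s t : sigma q (a *: s) t = sigma q s t ^ a.
Proof.
rewrite /sigma -prodXz; apply: eq_bigr => i _; rewrite -prodXz.
by apply: eq_bigr => j _; rewrite mxE exprz_exp; congr (_ ^ _); ring.
Qed.

Lemma sigmaZr (k : fieldType) n (q : 'M[k]_n) a s t : sigma q s (a *: t) = sigma q s t ^ a.
Proof.
rewrite /sigma -prodXz; apply: eq_bigr => i _; rewrite -prodXz.
by apply: eq_bigr => j _; rewrite mxE exprz_exp; congr (_ ^ _); ring.
Qed.

Lemma sigma_suml (k : fieldType) n (q : 'M[k]_n) (hq0 : forall i j, q i j != 0)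
   (I : Type) (r : seq I) (P : pred I) (F : I -> 'rV[int]_n) t :
  sigma q (\sum_(i <- r | P i) F i) t = \prod_(i <- r | P i) sigma q (F i) t.
Proof. exact: (big_morph (fun s => sigma q s t) (fun s s' => sigmaDl hq0 s s' t) (sigma0l q t)). Qed.

Lemma sigma_sumr (k : fieldType) n (q : 'M[k]_n) (hq0 : forall i j, q i j != 0)
   (I : Type) (r : seq I) (P : pred I) (F : I -> 'rV[int]_n) s :
  sigma q s (\sum_(i <- r | P i) F i) = \prod_(i <- r | P i) sigma q s (F i).
Proof. exact: (big_morph (fun t => sigma q s t) (fun t t' => sigmaDr hq0 s t t') (sigma0r q s)). Qed.

Lemma tri_swap (R : comRingType) n (G : 'I_n -> 'I_n -> R) :
  \prod_(i < n) \prod_(j < n | (j < i)%N) G i j =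
  \prod_(i < n) \prod_(j < n | (i < j)%N) G j i.
Proof.
rewrite (eq_bigr (fun i : 'I_n => \prod_(j < n) (if (j < i)%N then G i j else 1))); last first.
  by move=> i _; rewrite big_mkcond.
by rewrite exchange_big /=; apply: eq_bigr => i _; rewrite [RHS]big_mkcond.
Qed.

Lemma full_split (R : comRingType) n (G : 'I_n -> 'I_n -> R) :
  (forall i, G i i = 1) ->
  \prod_(i < n) \prod_(j < n) G i j =
  \prod_(i < n) \prod_(j < n | (j < i)%N) G i j *
  \prod_(i < n) \prod_(j < n | (i < j)%N) G i j.
Proof.
move=> hd; rewrite -[RHS]big_split; apply: eq_bigr => i _.
rewrite [X in _ = X * _]big_mkcond [X in _ = _ * X]big_mkcond -[RHS]big_split.
apply: eq_bigr => j _ /=.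
case: (ltngtP j i) => [lt|gt|eq]; rewrite ?mulr1 ?mul1r //.
by have -> : j = i by apply: val_inj. 
Qed.

Lemma gam_sigma (k : fieldType) n (q : 'M[k]_n) (hq0 : forall i j, q i j != 0)
  (hqii : forall i, q i i = 1) (hqij : forall i j, q i j = (q j i)^-1) s t :
  gam q s t = sigma q s t * gam q t s.
Proof.
have e1 : gam q t s = \prod_(i < n) \prod_(j < n | (i < j)%N) (q i j ^ (s ord0 i * t ord0 j))^-1.
  rewrite /gam tri_swap; apply: eq_bigr => i _; apply: eq_bigr => j _.
  by rewrite (hqij j i) exprz_inv invr_expz mulrC.
rewrite e1 /sigma full_split; last by move=> i; rewrite hqii exp1rz.
rewrite -mulrA -big_split /= [X in _ * X](eq_bigr (fun i => 1)) ?big1_eq ?mulr1 //.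
move=> i _; rewrite -big_split big1 // => j _ /=; rewrite mulfV //; exact: expfz_neq0.
Qed.




Lemma mulB_diag (k : fieldType) n (B : 'M[int]_n) (p : 'S_n)
  (hdiag : forall i j : 'I_n, (i != j -> B (p i) j = 0) /\ 0 < B (p i) i)
  (m : 'rV[int]_n) j :
  (m *m B) ord0 j = m ord0 (p j) * B (p j) j.
Proof.
rewrite mxE (reindex_inj (@perm_inj _ p)) (bigD1 j) //= big1 ?addr0 //.
move=> i /negbTE ij; have [h _] := hdiag i j.
by rewrite h ?mulr0 // ij.
Qed.

Lemma gam_row_diag (k : fieldType) n (q : 'M[k]_n) (B : 'M[int]_n) (p : 'S_n)
  (hdiag : forall i j : 'I_n, (i != j -> B (p i) j = 0) /\ 0 < B (p i) i) i :
  gam q (row i B) (row i B) = 1.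
Proof.
have [i' ->] : exists i', i = p i' by exists (p^-1 i)%g; rewrite permKV.
rewrite /gam big1 // => a _; rewrite big1 // => b hb; rewrite !mxE.
case: (eqVneq a i') => [ea|na].
  have nb : i' != b by apply/eqP => eb; move: hb; rewrite ea eb ltnn.
  by rewrite (proj1 (hdiag i' b) nb) mulr0 expr0z.
by rewrite (proj1 (hdiag i' a)) ?mul0r ?expr0z // eq_sym.
Qed.

Lemma zcoefE (k : fieldType) n (q : 'M[k]_n) (B : 'M[int]_n)
  (hdg : forall i, gam q (row i B) (row i B) = 1) m :
  zcoef q B m = \prod_(i < n) \prod_(j < n | (i < j)%N)
      gam q (row i B) (row j B) ^ (m ord0 i * m ord0 j).
Proof.
rewrite /zcoef big1 ?mul1r; last by move=> i _; rewrite hdg exp1rz.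
apply: eq_bigr => i _; apply: eq_bigr => j _.
by rewrite gamZl gamZr exprz_exp; congr (_ ^ _); ring.
Qed.

Lemma gamB (k : fieldType) n (q : 'M[k]_n) (hq0 : forall i j, q i j != 0)
  (B : 'M[int]_n) m m' :
  gam q (m *m B) (m' *m B) = \prod_(i < n) \prod_(j < n)
      gam q (row i B) (row j B) ^ (m ord0 i * m' ord0 j).
Proof.
rewrite !mulmx_sum_row gam_suml //; apply: eq_bigr => i _.
rewrite gam_sumr //; apply: eq_bigr => j _.
by rewrite gamZl gamZr exprz_exp; congr (_ ^ _); ring.
Qed.

Lemma zcoefM (k : fieldType) n (q : 'M[k]_n) (hq0 : forall i j, q i j != 0)
  (B : 'M[int]_n)
  (hdg : forall i, gam q (row i B) (row i B) = 1)
  (hsym : forall i j, gam q (row i B) (row j B) = gam q (row j B) (row i B)) m m' :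
  zcoef q B (m + m') = zcoef q B m * zcoef q B m' * gam q (m *m B) (m' *m B).
Proof.
rewrite gamB // full_split; last by move=> i; rewrite hdg exp1rz.
rewrite tri_swap !zcoefE //.
rewrite -mulrA -[X in _ * (_ * X)]big_split -[X in _ * X]big_split -big_split /=.
apply: eq_bigr => i _; rewrite -[X in _ * (_ * X)]big_split -[X in _ * X]big_split -[RHS]big_split; apply: eq_bigr => j _ /=.
rewrite (hsym j i) -!expfzDr ?gam_neq0 //; congr (_ ^ _); rewrite !mxE; ring.
Qed.




Lemma absz_bound (x : int) : - ((absz x)%:Z) <= x <= (absz x)%:Z.
Proof. case: x => m; rewrite ?NegzE /=; lia. Qed.

Lemma absz_le_sum n (u : 'rV[int]_n) i : (absz (u ord0 i) <= \sum_j absz (u ord0 j))%N.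
Proof. by rewrite (bigD1 i) //= leq_addr. Qed.

Lemma inbox_sum n (u : 'rV[int]_n) : inbox (\sum_j absz (u ord0 j)) u.
Proof.
move=> i; have := absz_le_sum u i; have := absz_bound (u ord0 i).
move: (\sum_j _)%N => S; lia.
Qed.

Lemma box_bound n (N1 N2 : nat) (u s : 'rV[int]_n) :
  (forall i, - (N1%:Z) <= s ord0 i) -> (forall i, - (N2%:Z) <= (u - s) ord0 i) ->
  inbox (N1 + N2 + \sum_j absz (u ord0 j)) s /\
  inbox (N1 + N2 + \sum_j absz (u ord0 j)) (u - s).
Proof.
move=> h1 h2; split=> i; have := h1 i; have := h2 i; rewrite !mxE;
have := absz_le_sum u i; have := absz_bound (u ord0 i);
move: (\sum_j _)%N (absz (u ord0 i)) (u ord0 i) (s ord0 i) => S a x y; lia.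
Qed.

Lemma boxsum_ext (k : fieldType) n M (F G : 'rV[int]_n -> k) :
  (forall s, F s = G s) -> boxsum M F = boxsum M G.
Proof. by move=> h; rewrite /boxsum; apply: eq_bigr => v _; rewrite h. Qed.

Lemma boxsum_single (k : fieldType) n M (F : 'rV[int]_n -> k) s0 :
  (forall s, s != s0 -> F s = 0) -> inbox M s0 -> boxsum M F = F s0.
Proof.
move=> h b; rewrite boxsumE (bigD1_seq s0) ?boxseq_uniq ?mem_boxseq //=.
by rewrite big1 ?addr0 // => s /h.
Qed.

Lemma mulf_neq0_3 (k : fieldType) (x y z : k) : x * y * z != 0 -> [/\ x != 0, y != 0 & z != 0].
Proof. by rewrite !mulf_eq0 !negb_or => /andP[/andP[-> ->] ->]. Qed.

Definition bnd n (N : nat) (c : 'rV[int]_n -> Type) := True.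

Lemma cent (k : fieldType) n (q : 'M[k]_n) (hq0 : forall i j, q i j != 0)
  (hqii : forall i, q i i = 1) (hqij : forall i j, q i j = (q j i)^-1)
  (f g : 'rV[int]_n -> k) (N1 N2 : nat) :
  (forall s, f s != 0 -> forall i, - (N1%:Z) <= s ord0 i) ->
  (forall s, g s != 0 -> forall i, - (N2%:Z) <= s ord0 i) ->
  (forall s, f s != 0 -> inS q s) ->
  forall h, mulrel (gam q) f g h <-> mulrel (gam q) g f h.
Proof.
move=> bf bg sf h.
have key u : exists M0, forall M, (M0 <= M)%N ->
   boxsum M (fun s => f s * g (u - s) * gam q s (u - s)) =
   boxsum M (fun s => g s * f (u - s) * gam q s (u - s)).
  exists (N1 + N2 + \sum_j absz (u ord0 j))%N => M le.
  pose G t := f t * g (u - t) * gam q (u - t) t.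
  rewrite [RHS](@boxsum_ext _ _ M _ (fun s => G (u - s))); last first.
    move=> s; rewrite /G; have -> : u - (u - s) = s by rewrite opprB addrC -addrA addNr addr0.
    by rewrite [g s * _]mulrC.
  rewrite (boxsum_refl (M' := M)); last first.
    move=> t /mulf_neq0_3 [ft gt _].
    have [b1 b2] := box_bound (bf t ft) (bg _ gt).
    by split; apply: inbox_le b1 || apply: inbox_le b2.
  apply: boxsum_ext => t; rewrite /G.
  case: (eqVneq (f t) 0) => [->|ft]; first by rewrite !mul0r.
  by rewrite (gam_sigma hq0 hqii hqij t) (sf t ft) mul1r.
split=> H u; [apply: (proj1 (ev_iff (h u) (key u))) | apply: (proj2 (ev_iff (h u) (key u)))];
  exact: H.
Qed.




Definition delta (k : fieldType) n (j : 'I_n) : 'rV[int]_n -> k :=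
  fun t => if t == delta_mx 0 j then 1 else 0.

Lemma cent_supp (k : fieldType) n (q : 'M[k]_n) (hq0 : forall i j, q i j != 0)
  (hqii : forall i, q i i = 1) (hqij : forall i j, q i j = (q j i)^-1)
  (f : 'rV[int]_n -> k) :
  (forall j h, mulrel (gam q) f (@delta k n j) h <-> mulrel (gam q) (@delta k n j) f h) ->
  forall s, f s != 0 -> inS q s.
Proof.
move=> H s fs.
have e1 j : sigma q s (delta_mx 0 j) = 1.
  set E := delta_mx 0 j.
  pose h1 := fun u => f (u - E) * gam q (u - E) E.
  pose h2 := fun u => f (u - E) * gam q E (u - E).
  have m1 : mulrel (gam q) f (@delta k n j) h1.
    move=> u; exists (\sum_(i < n) absz ((u - E)%R ord0 i))%N => M' le.
    rewrite (@boxsum_single _ _ _ _ (u - E)).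
    - have -> : u - (u - E) = E by rewrite opprB addrC -addrA addNr addr0.
      by rewrite /h1 /delta eqxx mulr1.
    - move=> t ne; rewrite /delta ifF ?mulr0 ?mul0r //.
      apply/negbTE/eqP => e; move: ne; rewrite /E -e.
      by rewrite opprB addrC -addrA addNr addr0 eqxx.

    - exact: inbox_le (inbox_sum _).
  have m2 : mulrel (gam q) (@delta k n j) f h2.
    move=> u; exists (\sum_(i < n) absz (E ord0 i))%N => M' le.
    rewrite (@boxsum_single _ _ _ _ E).
    - by rewrite /h2 /delta eqxx mul1r.
    - by move=> t ne; rewrite /delta ifF ?mul0r //; apply/negbTE.
    - exact: inbox_le (inbox_sum _).
  have := ev_uniq (proj1 (H j h1) m1 (s + E)) (m2 (s + E)).
  rewrite /h1 /h2 addrK => /(mulfI fs).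
  rewrite (gam_sigma hq0 hqii hqij s E) => e.
  by apply: (mulIf (gam_neq0 hq0 E s)); rewrite mul1r.
move=> t; rewrite (row_sum_delta t) sigma_sumr //; apply: big1 => j _.
by rewrite sigmaZr e1 exp1rz.
Qed.

Definition Pg (k : fieldType) n (b : bool) (c : 'rV[int]_n -> k) : Prop :=
  exists N : nat, (b = false -> N = 0%N) /\
    forall s, c s != 0 -> forall i, - (N%:Z) <= s ord0 i.

Lemma isL_Pg (k : fieldType) n (c : 'rV[int]_n -> k) : isL c <-> Pg true c.
Proof. by split=> [[N h]|[N [_ h]]]; exists N. Qed.

Lemma isR_Pg (k : fieldType) n (c : 'rV[int]_n -> k) : isR c <-> Pg false c.
Proof.
split=> [h|[N [e h]]]; first by exists 0%N; split=> // s /h.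
by move=> s /h; rewrite e.
Qed.

Lemma delta_Pg (k : fieldType) n b j : Pg b (@delta k n j).
Proof.
exists 0%N; split=> // s; rewrite /delta; case: (s =P delta_mx 0 j) => [-> _ i|]; last by rewrite eqxx.
by rewrite mxE; case: (_ == _).
Qed.




Definition Hdiag n (B : 'M[int]_n) (p : 'S_n) :=
  forall i j : 'I_n, (i != j -> B (p i) j = 0) /\ 0 < B (p i) i.

Definition pre n (B : 'M[int]_n) (p : 'S_n) (u : 'rV[int]_n) : 'rV[int]_n :=
  \row_i ((u ord0 ((p^-1)%g i)) %/ B (p ((p^-1)%g i)) ((p^-1)%g i))%Z.

Definition divb n (B : 'M[int]_n) (p : 'S_n) (u : 'rV[int]_n) : bool :=
  [forall j, (B (p j) j %| u ord0 j)%Z].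

Definition Phi (k : fieldType) n (q : 'M[k]_n) (B : 'M[int]_n) (p : 'S_n)
  (mu : 'rV[int]_n -> k) (u : 'rV[int]_n) : k :=
  if divb B p u then mu (pre B p u) * zcoef q B (pre B p u) else 0.

Definition Cb n (B : 'M[int]_n) (p : 'S_n) : nat := \sum_(j < n) absz (B (p j) j).

Lemma mulBd n (B : 'M[int]_n) (p : 'S_n) (hd : Hdiag B p) (m : 'rV[int]_n) j :
  (m *m B) ord0 j = m ord0 (p j) * B (p j) j.
Proof.
rewrite mxE (reindex_inj (@perm_inj _ p)) (bigD1 j) //= big1 ?addr0 //.
move=> i /negbTE ij; have [h _] := hd i j.
by rewrite h ?mulr0 // ij.
Qed.

Lemma zero_ord : (0 : 'I_1) = ord0. Proof. by apply: val_inj. Qed.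

Lemma mB_inj n (B : 'M[int]_n) (p : 'S_n) (hd : Hdiag B p) (m m' : 'rV[int]_n) :
  m *m B = m' *m B -> m = m'.
Proof.
move=> /rowP e; apply/rowP => i; rewrite zero_ord; move: e; rewrite zero_ord => e.
have [j ->] : exists j, i = p j by exists ((p^-1)%g i); rewrite permKV.
have := e j; rewrite !(mulBd hd).
have := (proj2 (hd j j)); move: (B (p j) j) => c cpos /mulIf; apply.
by rewrite lt0r_neq0.
Qed.

Lemma pre_mB n (B : 'M[int]_n) (p : 'S_n) (hd : Hdiag B p) (m : 'rV[int]_n) :
  pre B p (m *m B) = m /\ divb B p (m *m B).
Proof.
split.
  apply/rowP => i; rewrite zero_ord mxE.
  have := mulBd hd m ((p^-1)%g i); move=> ->; rewrite permKV mulzK //.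
  by rewrite gt_eqF //; have := proj2 (hd ((p^-1)%g i) ((p^-1)%g i)); rewrite permKV.
by apply/forallP => j; rewrite (mulBd hd) dvdz_mull.
Qed.

Lemma pre_div n (B : 'M[int]_n) (p : 'S_n) (hd : Hdiag B p) (u : 'rV[int]_n) :
  divb B p u -> pre B p u *m B = u.
Proof.
move=> /forallP dv; apply/rowP => j; rewrite zero_ord (mulBd hd) mxE permK.
by rewrite divzK.
Qed.




Lemma zcoef_neq0 (k : fieldType) n (q : 'M[k]_n) (hq0 : forall i j, q i j != 0)
  (B : 'M[int]_n) m : zcoef q B m != 0.
Proof.
rewrite /zcoef mulf_neq0 //; apply/prodf_neq0 => i _.
  exact/expfz_neq0/gam_neq0.
by apply/prodf_neq0 => j _; exact/gam_neq0.
Qed.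

Lemma PhiRel_Phi (k : fieldType) n (q : 'M[k]_n) (B : 'M[int]_n) (p : 'S_n)
  (hd : Hdiag B p) mu : PhiRel q B mu (Phi q B p mu).
Proof.
move=> u; split.
  move=> m <-; have [e1 e2] := pre_mB hd m; by rewrite /Phi e2 e1.
move=> h; rewrite /Phi; case: ifP => // dv.
by have := h (pre B p u); rewrite (pre_div hd dv) eqxx.
Qed.

Lemma PhiRel_eq (k : fieldType) n (q : 'M[k]_n) (B : 'M[int]_n) (p : 'S_n)
  (hd : Hdiag B p) mu f : PhiRel q B mu f -> forall u, f u = Phi q B p mu u.
Proof.
move=> h u; have [h1 h2] := h u; rewrite /Phi; case: ifP => dv.
  by apply: h1; rewrite pre_div.
apply: h2 => m; apply/eqP => e; have := (pre_mB hd m).2; by rewrite e dv.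
Qed.

Lemma cc_pos n (B : 'M[int]_n) (p : 'S_n) (hd : Hdiag B p) j : 0 < B (p j) j.
Proof. exact: (proj2 (hd j j)). Qed.

Lemma cc_le n (B : 'M[int]_n) (p : 'S_n) (hd : Hdiag B p) j : B (p j) j <= (Cb B p)%:Z.
Proof.
have : (absz (B (p j) j) <= Cb B p)%N by rewrite /Cb (bigD1 j) //= leq_addr.
have := cc_pos hd j; move: (B (p j) j) (Cb B p) => c C; lia.
Qed.

Lemma bound_fwd n (B : 'M[int]_n) (p : 'S_n) (hd : Hdiag B p) (N : nat) (m : 'rV[int]_n) :
  (forall i, - (N%:Z) <= m ord0 i) -> forall j, - ((N * Cb B p)%N%:Z) <= (m *m B) ord0 j.
Proof.
move=> h j; rewrite (mulBd hd); have := h (p j); have := cc_pos hd j; have := cc_le hd j.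
move: (B (p j) j) (Cb B p) (m ord0 (p j)) => c C x; nia.
Qed.

Lemma bound_back n (B : 'M[int]_n) (p : 'S_n) (hd : Hdiag B p) (N : nat) (m : 'rV[int]_n) :
  (forall j, - (N%:Z) <= (m *m B) ord0 j) -> forall i, - (N%:Z) <= m ord0 i.
Proof.
move=> h i; have [j ->] : exists j, i = p j by exists ((p^-1)%g i); rewrite permKV.
have := h j; rewrite (mulBd hd); have := cc_pos hd j.
move: (B (p j) j) (m ord0 (p j)) => c x; nia.
Qed.

Lemma inbox_fwd n (B : 'M[int]_n) (p : 'S_n) (hd : Hdiag B p) (K : nat) (m : 'rV[int]_n) :
  inbox K m -> inbox (K * Cb B p) (m *m B).
Proof.
move=> h j; rewrite (mulBd hd); have := h (p j); have := cc_pos hd j; have := cc_le hd j.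
move: (B (p j) j) (Cb B p) (m ord0 (p j)) => c C x; nia.
Qed.

Lemma inS_mB (k : fieldType) n (q : 'M[k]_n) (hq0 : forall i j, q i j != 0)
  (B : 'M[int]_n) (hB : isZbasisS q B) m : inS q (m *m B).
Proof.
move=> t; rewrite mulmx_sum_row sigma_suml //; apply: big1 => i _.
by rewrite sigmaZl (hB.1 i t) exp1rz.
Qed.

Lemma PhiRel_lin (k : fieldType) n (q : 'M[k]_n) (B : 'M[int]_n) (a : k) mu nu f g :
  PhiRel q B mu f -> PhiRel q B nu g ->
  PhiRel q B (fun s => a * mu s + nu s) (fun s => a * f s + g s).
Proof.
move=> hf hg u; have [f1 f2] := hf u; have [g1 g2] := hg u; split.
  by move=> m e; rewrite (f1 m e) (g1 m e) mulrDl mulrA.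
by move=> h; rewrite (f2 h) (g2 h) mulr0 addr0.
Qed.

Lemma PhiRel_inj (k : fieldType) n (q : 'M[k]_n) (hq0 : forall i j, q i j != 0)
  (B : 'M[int]_n) mu nu f :
  PhiRel q B mu f -> PhiRel q B nu f -> mu = nu.
Proof.
move=> hm hn; apply: functional_extensionality => m.
have := (hm (m *m B)).1 m erefl; rewrite ((hn (m *m B)).1 m erefl) => /eqP.
by rewrite eq_sym (inj_eq (mulIf (zcoef_neq0 hq0 B m))) => /eqP.
Qed.




Lemma Phi_nz (k : fieldType) n (q : 'M[k]_n) (B : 'M[int]_n) (p : 'S_n)
  (hd : Hdiag B p) mu f s :
  PhiRel q B mu f -> f s != 0 -> pre B p s *m B = s /\ mu (pre B p s) != 0.
Proof.
move=> hf; rewrite (PhiRel_eq hd hf) /Phi; case: ifP; last by rewrite eqxx.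
move=> dv nz; split; first exact: pre_div.
by apply: contraNneq nz => ->; rewrite mul0r.
Qed.

Lemma mult (k : fieldType) n (q : 'M[k]_n) (hq0 : forall i j, q i j != 0)
  (hqii : forall i, q i i = 1) (hqij : forall i j, q i j = (q j i)^-1)
  (B : 'M[int]_n) (hB : isZbasisS q B) (p : 'S_n) (hd : Hdiag B p)
  (mu nu rho f g h : 'rV[int]_n -> k) (N1 N2 : nat) :
  (forall s, mu s != 0 -> forall i, - (N1%:Z) <= s ord0 i) ->
  (forall s, nu s != 0 -> forall i, - (N2%:Z) <= s ord0 i) ->
  mulrel (fun _ _ => 1) mu nu rho ->
  PhiRel q B mu f -> PhiRel q B nu g -> PhiRel q B rho h ->
  mulrel (gam q) f g h.
Proof.
move=> b1 b2 hr hf hg hh u.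
have hdg := gam_row_diag q hd.
have hsym i j : gam q (row i B) (row j B) = gam q (row j B) (row i B).
  by rewrite (gam_sigma hq0 hqii hqij) (hB.1 i) mul1r.
case: (boolP (divb B p u)) => dv; last first.
  exists 0%N => M _.
  have -> : h u = 0.
    apply: (hh u).2 => m; apply/eqP => e; move: dv; by rewrite -e (pre_mB hd m).2.
  rewrite boxsumE big1 // => s _.
  case: (eqVneq (f s) 0) => [->|fs]; first by rewrite !mul0r.
  case: (eqVneq (g (u - s)) 0) => [->|gs]; first by rewrite mulr0 mul0r.
  have [e1 _] := Phi_nz hd hf fs; have [e2 _] := Phi_nz hd hg gs.
  move: dv; have <- : (pre B p s + pre B p (u - s)) *m B = u.
    by rewrite mulmxDl e1 e2 addrC subrK.
  by rewrite (pre_mB hd _).2.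
set w := pre B p u; have uw : w *m B = u by exact: pre_div.
have -> : h u = rho w * zcoef q B w by exact: (hh u).1 w uw.
have [M1 hM1] := hr w.
set Kb := (N1 + N2 + \sum_j absz (w ord0 j))%N.
exists (Kb * Cb B p)%N => M' le.
rewrite (hM1 (maxn M1 Kb) (leq_maxl _ _)) !boxsumE.
have key m : f (m *m B) * g (u - m *m B) * gam q (m *m B) (u - m *m B) =
     mu m * nu (w - m) * 1 * zcoef q B w.
  rewrite ((hf _).1 m erefl) -uw -mulmxBl ((hg _).1 (w - m) erefl).
  have -> : zcoef q B w = zcoef q B (m + (w - m)) by rewrite addrC subrK.
  rewrite [zcoef q B (m + _)](zcoefM hq0 hdg hsym); ring.
rewrite mulr_suml (eq_bigr _ (fun m _ => esym (key m))).
rewrite -(big_map (fun m => m *m B) xpredT (fun s => f s * g (u - s) * gam q s (u - s))).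
apply: sum_supp.
- by rewrite map_inj_uniq ?boxseq_uniq // => x y; exact: mB_inj hd x y.
- exact: boxseq_uniq.
move=> s /mulf_neq0_3 [fs gs _].
have [e1 m1] := Phi_nz hd hf fs.
set m := pre B p s in e1 m1.
have gs' : nu (w - m) != 0.
  move: gs; rewrite -uw -e1 -mulmxBl ((hg _).1 (w - m) erefl).
  by apply: contraNneq => ->; rewrite mul0r.
have [bb _] := box_bound (b1 _ m1) (b2 _ gs').
apply/andP; split.
  by rewrite -e1; apply: map_f; apply: mem_boxseq; apply: inbox_le bb; apply: leq_maxr.
by apply: mem_boxseq; rewrite -e1; apply: inbox_le (inbox_fwd hd bb).
Qed.




Lemma Pf_of (k : fieldType) n (q : 'M[k]_n) (B : 'M[int]_n) (p : 'S_n) (hd : Hdiag B p)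
  (b : bool) (P : ('rV[int]_n -> k) -> Prop) (hP : forall c, P c <-> Pg b c) mu f :
  P mu -> PhiRel q B mu f -> P f.
Proof.
move=> /hP [N [eN bN]] hm; apply/hP; exists (N * Cb B p)%N; split.
  by move=> /eN ->.
move=> u nz; have [e m1] := Phi_nz hd hm nz; have := bound_fwd hd (bN _ m1); by rewrite e.
Qed.

Lemma fwd (k : fieldType) n (q : 'M[k]_n) (hq0 : forall i j, q i j != 0)
  (hqii : forall i, q i i = 1) (hqij : forall i j, q i j = (q j i)^-1)
  (B : 'M[int]_n) (hB : isZbasisS q B) (p : 'S_n) (hd : Hdiag B p)
  (b : bool) (P : ('rV[int]_n -> k) -> Prop) (hP : forall c, P c <-> Pg b c) :
  center_is_series_ring P q B.
Proof.
split.
- move=> mu Pmu; exists (Phi q B p mu); split; last exact: PhiRel_Phi.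
  exact: (Pf_of hd hP Pmu (PhiRel_Phi q hd mu)).
- move=> f; split.
  + case=> /hP [N [eN bN]] hc.
    have sf := cent_supp hq0 hqii hqij
      (fun j h => hc (@delta k n j) (proj2 (hP _) (delta_Pg _ _ _)) h).
    exists (fun m => f (m *m B) / zcoef q B m); split.
      apply/hP; exists N; split => // m nz; apply: (bound_back hd) => j.
      by apply: bN; apply: contraNneq nz => ->; rewrite mul0r.
    move=> u; split.
      by move=> m <-; rewrite divfK ?zcoef_neq0.
    move=> nm; apply/eqP; apply: contraT => fu.
    have [m [e _]] := hB.2 u (sf u fu).
    by have := nm m; rewrite -e eqxx.
  + case=> mu [Pmu hm]; split; first exact: (Pf_of hd hP Pmu hm).
    move=> g /hP [N2 [_ bg]] h.
    have /hP [N1 [_ bf]] := Pf_of hd hP Pmu hm.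
    apply: (cent hq0 hqii hqij bf bg) => s fs.
    have [e _] := Phi_nz hd hm fs; rewrite -e; exact: inS_mB.
- move=> mu nu f _ _; exact: (PhiRel_inj hq0).
- exact: PhiRel_lin.
- move=> mu nu rho f g h /hP [N1 [_ b1]] /hP [N2 [_ b2]] hr hf hg hh.
  exact: (mult hq0 hqii hqij hB hd b1 b2 hr hf hg hh).
Qed.




Lemma eE n (i l : 'I_n) : (delta_mx 0 i : 'rV[int]_n) ord0 l = (l == i)%:R.
Proof. by rewrite mxE. Qed.

Lemma sig_e (k : fieldType) n (q : 'M[k]_n) j l :
  sigma q (delta_mx 0 j) (delta_mx 0 l) = q j l.
Proof.
rewrite /sigma (bigD1 j) //= [X in _ * X]big1 ?mulr1; last first.
  move=> a aj; rewrite big1 // => b _; rewrite eE (negbTE aj) mul0r expr0z //.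
rewrite (bigD1 l) //= [X in _ * X]big1 ?mulr1; last first.
  by move=> b bl; rewrite !eE (negbTE bl) mulr0 expr0z.
by rewrite !eE !eqxx mulr1 expr1z.
Qed.

Lemma inS_de (k : fieldType) n (q : 'M[k]_n) (hq0 : forall i j, q i j != 0) j (d : nat) :
  (forall l, q j l ^+ d = 1) -> inS q (d%:Z *: delta_mx 0 j).
Proof.
move=> h t; rewrite (row_sum_delta t) sigma_sumr // big1 // => l _.
by rewrite sigmaZr sigmaZl sig_e -exprnP h exp1rz.
Qed.

Lemma Bnonneg (k : fieldType) n (q : 'M[k]_n) (hq0 : forall i j, q i j != 0)
  (B : 'M[int]_n) (b : bool) (P : ('rV[int]_n -> k) -> Prop)
  (hP : forall c, P c <-> Pg b c) :
  center_is_series_ring P q B -> forall i j, 0 <= B i j.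
Proof.
move=> [H1 _ _ _ _] i j.
pose mu := fun m : 'rV[int]_n =>
  if [forall l, if l == i then 0 <= m ord0 l else m ord0 l == 0] then (1 : k) else 0.
have Pmu : P mu.
  apply/hP; exists 0%N; split=> // m; rewrite /mu; case: ifP; last by rewrite eqxx.
  move=> /forallP h _ l; have := h l; case: (l == i) => [|/eqP ->] //.
have [f [/hP [N [_ bf]] hf]] := H1 mu Pmu.
pose m := (N.+1)%:Z *: (delta_mx 0 i : 'rV[int]_n).
have mB : m *m B = (N.+1)%:Z *: row i B by rewrite -scalemxAl -rowE.
have fnz : f (m *m B) != 0.
  rewrite ((hf _).1 m erefl) mulf_neq0 ?zcoef_neq0 // /mu ifT ?oner_neq0 //.
  apply/forallP => l; rewrite /m mxE eE; case: (l == i) => //=.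
  by rewrite mulr0.
have := bf _ fnz j; rewrite mB !mxE; move: (B i j) => x; nia.
Qed.

Lemma colp (k : fieldType) n (q : 'M[k]_n) (hq0 : forall i j, q i j != 0)
  (hqii : forall i, q i i = 1) (hqij : forall i j, q i j = (q j i)^-1)
  (hroot : forall i j, exists m : nat, (0 < m)%N /\ q i j ^+ m = 1)
  (B : 'M[int]_n) (hB : isZbasisS q B) (b : bool) (P : ('rV[int]_n -> k) -> Prop)
  (hP : forall c, P c <-> Pg b c) :
  center_is_series_ring P q B ->
  forall j, exists i, 0 < B i j /\ forall l, l != j -> B i l = 0.
Proof.
move=> H j; have Bge := Bnonneg hq0 hP H; case: H => [_ H2 _ _ _].
have [ord hord] := fin_all_exists (hroot j).
pose d := (\prod_l ord l)%N.
have dpos : (0 < d)%N by apply: prodn_gt0 => l; exact: (hord l).1.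
have qd l : q j l ^+ d = 1.
  rewrite /d (bigD1 l) //= exprM (hord l).2 expr1n //.
pose v : 'rV[int]_n := d%:Z *: delta_mx 0 j.
have vS : inS q v := inS_de hq0 qd.
pose rb (u : 'rV[int]_n) := [forall l, if l == j then (0 <= u ord0 l) && (d%:Z %| u ord0 l)%Z
                        else u ord0 l == 0].
pose f := fun u : 'rV[int]_n => if rb u then (1 : k) else 0.
have fpos : forall s, f s != 0 -> forall i, - (0%N%:Z) <= s ord0 i.
  move=> s; rewrite /f; case: ifP; last by rewrite eqxx.
  move=> /forallP h _ l; have := h l; case: (l == j) => [/andP [] //|/eqP ->] //.
have fS : forall s, f s != 0 -> inS q s.
  move=> s; rewrite /f; case: ifP => [/forallP h _|]; last by rewrite eqxx.
  have -> : s = ((s ord0 j) %/ d%:Z)%Z *: v.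
    apply/rowP => l; rewrite zero_ord !mxE /=; have := h l.
    case: (l =P j) => [-> /andP [_ dv]|_ /eqP ->] /=; last by rewrite !mulr0.
    by rewrite mulr1 divzK.
  by move=> t; rewrite sigmaZl vS exp1rz.
have Pf : P f by apply/hP; exists 0%N; split.
have cf : central P (gam q) f.
  move=> g /hP [N2 [_ bg]] h; exact: (cent hq0 hqii hqij fpos bg fS).
have [mu [/hP [N [_ bmu]] hm]] := (proj1 (H2 f)) (conj Pf cf).
have rbv t : (0 <= t) -> rb (t *: v).
  move=> t0; apply/forallP => l; rewrite !mxE /=; case: (l =P j) => _ /=.
    by rewrite mulr1 mulr_ge0 //= dvdz_mull.
  by rewrite !mulr0.
have [m1 e1] : exists m1, m1 *m B = v.
  apply/not_all_not_ex => hn; have := (hm v).2 (fun m => introN eqP (hn m)).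
  rewrite /f; have := rbv 1 ler01; rewrite scale1r => ->; move/eqP; by rewrite oner_eq0.
have [mT [eT muT]] : exists mT, mT *m B = (N.+1)%:Z *: v /\ mu mT != 0.
  have fv : f ((N.+1)%:Z *: v) != 0 by rewrite /f rbv ?oner_eq0.
  have [mT eT] : exists mT, mT *m B = (N.+1)%:Z *: v.
    apply/not_all_not_ex => hn; move: fv; rewrite ((hm _).2 (fun m => introN eqP (hn m))).
    by rewrite eqxx.
  exists mT; split=> //; move: fv; rewrite ((hm _).1 mT eT).
  by apply: contraNneq => ->; rewrite mul0r.
have eT' : mT = (N.+1)%:Z *: m1.
  have SN : inS q ((N.+1)%:Z *: v) by move=> t; rewrite sigmaZl vS exp1rz.
  have [m0 [_ u0]] := hB.2 _ SN.
  by rewrite -(u0 mT (esym eT)) (u0 ((N.+1)%:Z *: m1)) // -scalemxAl e1.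
have m1pos i : 0 <= m1 ord0 i.
  have := bmu _ muT i; rewrite eT' mxE; move: (m1 ord0 i) => x; nia.
have vj : 0 < \sum_i m1 ord0 i * B i j.
  have := f_equal (fun r : 'rV[int]_n => r ord0 j) e1; rewrite mxE /= => ->.
  by rewrite /v !mxE /= eqxx mulr1 ltz_nat.
have [i ipos] : exists i, 0 < m1 ord0 i * B i j.
  apply/not_all_not_ex => hn; move: vj; rewrite big1 ?ltxx // => i _.
  apply/eqP; rewrite eq_le mulr_ge0 // andbT leNgt; exact/negP/hn.
exists i; split.
  by move: ipos; have := m1pos i; have := Bge i j; move: (m1 ord0 i) (B i j) => x y; nia.
move=> l lj.
have z : \sum_i0 m1 ord0 i0 * B i0 l = 0.
  have := f_equal (fun r : 'rV[int]_n => r ord0 l) e1; rewrite mxE /= => ->.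
  by rewrite /v !mxE /= (negbTE lj) mulr0.
have := @psumr_eq0P _ _ xpredT _ (fun i0 _ => mulr_ge0 (m1pos i0) (Bge i0 l)) z i isT.
move: ipos; have := m1pos i; have := Bge i j; have := Bge i l.
move: (m1 ord0 i) (B i j) (B i l) => x y w; nia.
Qed.

Theorem theorem3p4 (k : closedFieldType) (n : nat) (hn : (0 < n)%N)
    (q : 'M[k]_n)
    (hq0 : forall i j, q i j != 0)
    (hqii : forall i, q i i = 1)
    (hqij : forall i j, q i j = (q j i)^-1)
    (hroot : forall i j, exists m : nat, (0 < m)%N /\ q i j ^+ m = 1)
    (B : 'M[int]_n) (hB : isZbasisS q B) :
  [<-> pos_diag_after_reorder B;
       center_is_series_ring (@isL k n) q B;
       center_is_series_ring (@isR k n) q B].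
Proof.
have hL : forall c, @isL k n c <-> Pg true c := fun c => isL_Pg c.
have hR : forall c, @isR k n c <-> Pg false c := fun c => isR_Pg c.
have bwd : forall (b : bool) (P : ('rV[int]_n -> k) -> Prop),
    (forall c, P c <-> Pg b c) -> center_is_series_ring P q B -> pos_diag_after_reorder B.
  move=> b P hP H.
  have [sg hsg] := fin_all_exists (colp hq0 hqii hqij hroot hB hP H).
  have sinj : injective sg.
    move=> j j' e; apply/eqP; apply: contraT => nj.
    have := (hsg j).2 j'; rewrite eq_sym nj => /(_ isT); rewrite e => z.
    by have := (hsg j').1; rewrite z ltxx.
  exists (perm sinj) => i j; rewrite permE; split; last exact: (hsg i).1.
  by move=> ij; apply: (hsg i).2; rewrite eq_sym.
have fw : forall (b : bool) (P : ('rV[int]_n -> k) -> Prop),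
    (forall c, P c <-> Pg b c) -> pos_diag_after_reorder B -> center_is_series_ring P q B.
  move=> b P hP [p hd]; exact: (fwd hq0 hqii hqij hB hd hP).
tfae.
- exact: fw _ _ hL.
- by move=> /(bwd _ _ hL) /(fw _ _ hR).
- exact: bwd _ _ hR.
Qed.
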